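(* For every $t\in[0,T]$ and every symmetric positive semidefinite $n\times n$ matrix $S$, one has $\tilde Q(S)\ge 0$ (at time $t$), where $\tilde Q$ is defined in the context.
   Context: Fix $T>0$, integers $n,l_1,l_2,d\ge1$, and deterministic coefficients on $[0,T]$: $C^1,\dots,C^d$ with values in $\mathbb R^{n\times n}$, $D^{1j}$ in $\mathbb R^{n\times l_1}$, $D^{2j}$ in $\mathbb R^{n\times l_2}$ ($j=1,\dots,d$), $Q$ with values in nonnegative definite symmetric $n\times n$ matrices, and $R^1,R^2$ with values in positive definite symmetric $l_1\times l_1$, $l_2\times l_2$ matrices. Block notation (time argument suppressed): $C:=\begin{pmatrix}C^1\\ \vdots\\ C^d\end{pmatrix}\in\mathbb R^{nd\times n}$, $D^i:=\begin{pmatrix}D^{i1}\\ \vdots\\ D^{id}\end{pmatrix}\in\mathbb R^{nd\times l_i}$, and for an $n\times n$ matrix $S$, $\hat S:=\mathrm{diag}(S,\dots,S)$ ($d$ copies), so that e.g. $C'\hat SC=\sum_j (C^j)'SC^j$ and $(D^1)'\hat SD^2=\sum_j(D^{1j})'SD^{2j}$. Define $\Lambda_i(S):=R^i+(D^i)'\hat SD^i$ ($i=1,2$), $\hat\Lambda(S):=\Lambda_1(S)-(D^1)'\hat SD^2\Lambda_2(S)^{-1}(D^2)'\hat SD^1$, $U(S):=\hat S-\hat SD^2\Lambda_2(S)^{-1}(D^2)'\hat S$ (an $nd\times nd$ matrix), $\tilde Q(S):=Q+C'U(S)C-C'U(S)D^1\hat\Lambda(S)^{-1}(D^1)'U(S)C$.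 *)

(* Defs.v *)
From mathcomp Require Import all_boot all_order all_algebra.
From mathcomp Require Import reals.
Set Implicit Arguments. Unset Strict Implicit. Unset Printing Implicit Defensive.
Import Order.TTheory GRing.Theory Num.Theory.
Local Open Scope ring_scope.

Section Defs.
Variable R : realType.

Definition psdmx (m : nat) (A : 'M[R]_m) : Prop :=
  A^T = A /\ forall x : 'cV[R]_m, 0 <= (x^T *m A *m x) 0 0.

Definition pdmx (m : nat) (A : 'M[R]_m) : Prop :=
  A^T = A /\ forall x : 'cV[R]_m, x != 0 -> 0 < (x^T *m A *m x) 0 0.

Variables (n d : nat).

Notation nd := (\sum_(j < d) n)%N.

Definition hatmx (S : 'M[R]_n) : 'M[R]_nd := \mxdiag_(j < d) S.

Definition stackmx (k : nat) (X : 'I_d -> 'M[R]_(n, k)) : 'M[R]_(nd, k) :=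
  \mxcol_(j < d) X j.

Definition Lambda (l : nat) (Ri : 'M[R]_l) (Di : 'M[R]_(nd, l)) (S : 'M[R]_n)
  : 'M[R]_l := Ri + Di^T *m hatmx S *m Di.

Definition Lambdahat (l1 l2 : nat) (R1 : 'M[R]_l1) (R2 : 'M[R]_l2)
  (D1 : 'M[R]_(nd, l1)) (D2 : 'M[R]_(nd, l2)) (S : 'M[R]_n) : 'M[R]_l1 :=
  Lambda R1 D1 S
  - D1^T *m hatmx S *m D2 *m invmx (Lambda R2 D2 S) *m D2^T *m hatmx S *m D1.

Definition Umx (l2 : nat) (R2 : 'M[R]_l2) (D2 : 'M[R]_(nd, l2)) (S : 'M[R]_n)
  : 'M[R]_nd :=
  hatmx S - hatmx S *m D2 *m invmx (Lambda R2 D2 S) *m D2^T *m hatmx S.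

Definition Qtilde (l1 l2 : nat) (Q : 'M[R]_n) (C : 'M[R]_(nd, n))
  (R1 : 'M[R]_l1) (R2 : 'M[R]_l2)
  (D1 : 'M[R]_(nd, l1)) (D2 : 'M[R]_(nd, l2)) (S : 'M[R]_n) : 'M[R]_n :=
  let U := Umx R2 D2 S in
  Q + C^T *m U *m C
  - C^T *m U *m D1 *m invmx (Lambdahat R1 R2 D1 D2 S) *m D1^T *m U *m C.

End Defs.

(* Main.v *)
Require Import Defs.
From mathcomp Require Import all_boot all_order all_algebra.
From mathcomp Require Import reals.
Import Order.TTheory GRing.Theory Num.Theory.
Local Open Scope ring_scope.

Section Aux.
Variable R : realType.

Lemma tr11 (A : 'M[R]_1) : A^T = A.
Proof. by apply/matrixP => i j; rewrite !ord1 mxE. Qed.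

Lemma trN {m k} (A : 'M[R]_(m,k)) : (- A)^T = - A^T.
Proof. by apply/matrixP => i j; rewrite !mxE. Qed.
Lemma trD {m k} (A B : 'M[R]_(m,k)) : (A + B)^T = A^T + B^T.
Proof. by apply/matrixP => i j; rewrite !mxE. Qed.
Lemma trB {m k} (A B : 'M[R]_(m,k)) : (A - B)^T = A^T - B^T.
Proof. by apply/matrixP => i j; rewrite !mxE. Qed.

Lemma ac5 (V : zmodType) (a b c d e : V) : a + (b + c + (d + e)) = b + (a + e) + c + d.
Proof. by rewrite !addrA (addrC a b) -!addrA; congr (_ + (_ + _)); rewrite addrC -addrA addrC -addrA. Qed.

Lemma square (N l : nat) (H : 'M[R]_N) (Rm : 'M[R]_l) (D : 'M[R]_(N,l)) (z : 'cV[R]_N):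
 H^T = H -> Rm^T = Rm -> (Rm + D^T *m H *m D) \in unitmx ->
 let v := - (invmx (Rm + D^T *m H *m D) *m (D^T *m H *m z)) in
 v^T *m Rm *m v + (z + D *m v)^T *m H *m (z + D *m v) =
 z^T *m (H - H *m D *m invmx (Rm + D^T *m H *m D) *m D^T *m H) *m z.
Proof.
move=> HT RT Lu v.
set L := Rm + D^T *m H *m D in Lu v *.
set b := D^T *m H *m z in v *.
set Li := invmx L in v *.
have LT : L^T = L by rewrite /L trD trmx_mul trmx_mul trmxK HT RT mulmxA.
have LiT : Li^T = Li by rewrite /Li trmx_inv LT.
have bT : b^T = z^T *m H *m D by rewrite /b !trmx_mul trmxK HT mulmxA.
have E1 : v^T *m L *m v = b^T *m Li *m b.
  rewrite /v trN !mulNmx mulmxN opprK trmx_mul LiT.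
  by rewrite -!mulmxA (mulmxA L) mulmxV // mul1mx.
have E2 : (z^T *m H) *m (D *m v) = v^T *m b.
  by rewrite -[LHS]tr11 !trmx_mul trmxK HT /b !mulmxA.
have E3 : v^T *m b = - (b^T *m Li *m b).
  by rewrite /v trN mulNmx trmx_mul LiT mulmxA.
have -> : v^T *m Rm *m v + (z + D *m v)^T *m H *m (z + D *m v)
   = z^T *m H *m z + v^T *m L *m v + (z^T *m H) *m (D *m v) + v^T *m b.
  by rewrite /L /b !trD !mulmxDl !mulmxDr !trmx_mul !mulmxA mulmxDl ac5.
by rewrite E1 E2 E3 mulmxBr mulmxBl bT !mulmxA addrK.
Qed.

Lemma quadD {m} (x : 'cV[R]_m) (A B : 'M[R]_m) :
  (x^T *m (A + B) *m x) 0 0 = (x^T *m A *m x) 0 0 + (x^T *m B *m x) 0 0.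
Proof. by rewrite mulmxDr mulmxDl mxE. Qed.

Lemma quadC {m k} (x : 'cV[R]_m) (C : 'M[R]_(k, m)) (A : 'M[R]_k) :
  x^T *m (C^T *m A *m C) *m x = (C *m x)^T *m A *m (C *m x).
Proof. by rewrite trmx_mul !mulmxA. Qed.

Lemma psdD {m} (A B : 'M[R]_m) : psdmx A -> psdmx B -> psdmx (A + B).
Proof.
move=> [AT Ap] [BT Bp]; split; first by rewrite trD AT BT.
by move=> x; rewrite quadD addr_ge0.
Qed.

Lemma psdC {m k} (C : 'M[R]_(k, m)) (A : 'M[R]_k) : psdmx A -> psdmx (C^T *m A *m C).
Proof.
move=> [AT Ap]; split; first by rewrite !trmx_mul trmxK AT mulmxA.
by move=> x; rewrite quadC.
Qed.

Lemma pd_psd {m} (A : 'M[R]_m) : pdmx A -> psdmx A.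
Proof.
move=> [AT Ap]; split => // x; have [->|nz] := eqVneq x 0.
  by rewrite mulmx0 mxE.
exact/ltW/Ap.
Qed.

Lemma pd_unit {m} (A : 'M[R]_m) : pdmx A -> A \in unitmx.
Proof.
move=> [AT Ap]; rewrite -row_free_unit -kermx_eq0; apply/negPn/negP => nz.
have [i ri] : exists i, row i (kermx A) != 0.
  apply/existsP; apply: contraR nz => /existsPn H.
  by apply/eqP/row_matrixP => i; rewrite row0; apply/eqP/negPn/H.
have rA : row i (kermx A) *m A = 0 by rewrite -row_mul mulmx_ker row0.
have := Ap (row i (kermx A))^T; rewrite trmx_eq0 ri trmxK rA mul0mx mxE ltxx.
by move/(_ isT).
Qed.

Lemma symW {N l} (H : 'M[R]_N) (L : 'M[R]_l) (D : 'M[R]_(N, l)) :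
  H^T = H -> L^T = L ->
  (H - H *m D *m invmx L *m D^T *m H)^T = H - H *m D *m invmx L *m D^T *m H.
Proof.
move=> HT LT; rewrite trB !trmx_mul trmx_inv trmxK HT LT !mulmxA //.
Qed.

Lemma pd_schur {N l} (H : 'M[R]_N) (Rm : 'M[R]_l) (D : 'M[R]_(N, l)) :
  psdmx H -> pdmx Rm ->
  [/\ pdmx (Rm + D^T *m H *m D), (Rm + D^T *m H *m D) \in unitmx &
      psdmx (H - H *m D *m invmx (Rm + D^T *m H *m D) *m D^T *m H)].
Proof.
move=> [HT Hp] Rpd; have [RT Rp] := Rpd.
have Lpd : pdmx (Rm + D^T *m H *m D).
  split; first by rewrite trD !trmx_mul trmxK HT RT mulmxA.
  by move=> x nz; rewrite quadD quadC; apply: (lt_le_trans (Rp x nz)); rewrite lerDl.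
have Lu := pd_unit _ Lpd; split => //; split; first by rewrite symW //; case: Lpd.
move=> z; rewrite -(@square N l H Rm D z HT RT Lu) mxE.
by apply: addr_ge0; [case: (pd_psd _ Rpd) => _; apply | apply: Hp].
Qed.


Lemma hat_psd {n d} (S : 'M[R]_n) : psdmx S -> psdmx (@hatmx R n d S).
Proof.
move=> [ST Sp]; split.
  by rewrite /hatmx tr_mxdiag; apply: eq_mxdiag => i.
move=> z; rewrite /hatmx -(submxcolK z) tr_mxcol mul_mxrow_mxdiag mul_mxrow_mxcol summxE.
apply: sumr_ge0 => i _; exact: Sp.
Qed.


Lemma main_gen {N n l1 l2} (Q : 'M[R]_n) (C : 'M[R]_(N, n)) (R1 : 'M[R]_l1)
  (R2 : 'M[R]_l2) (D1 : 'M[R]_(N, l1)) (D2 : 'M[R]_(N, l2)) (H : 'M[R]_N) :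
  psdmx Q -> pdmx R1 -> pdmx R2 -> psdmx H ->
  let L2 := R2 + D2^T *m H *m D2 in
  let U := H - H *m D2 *m invmx L2 *m D2^T *m H in
  let Lh := R1 + D1^T *m H *m D1 - D1^T *m H *m D2 *m invmx L2 *m D2^T *m H *m D1 in
  psdmx (Q + C^T *m U *m C - C^T *m U *m D1 *m invmx Lh *m D1^T *m U *m C).
Proof.
move=> Qp R1p R2p Hp L2 U Lh.
have [_ _ Up] := pd_schur H R2 D2 Hp R2p.
have eLh : Lh = R1 + D1^T *m U *m D1.
  by rewrite /Lh /U mulmxBr mulmxBl !mulmxA addrA.
have [_ _ Wp] := pd_schur U R1 D1 Up R1p.
rewrite eLh -addrA; apply: psdD => //.
clearbody U.
set W := U - _ in Wp.
have -> : C^T *m U *m C - C^T *m U *m D1 *m invmx (R1 + D1^T *m U *m D1) *m D1^T *m U *m C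
  = C^T *m W *m C by rewrite /W mulmxBr mulmxBl !mulmxA.
exact: psdC.
Qed.

End Aux.

Theorem lemma3p1 (R : realType) (T : R) (n l1 l2 d : nat)
  (C : R -> 'I_d -> 'M[R]_n)
  (D1 : R -> 'I_d -> 'M[R]_(n, l1)) (D2 : R -> 'I_d -> 'M[R]_(n, l2))
  (Q : R -> 'M[R]_n) (R1 : R -> 'M[R]_l1) (R2 : R -> 'M[R]_l2) :
  0 < T -> (0 < n)%N -> (0 < l1)%N -> (0 < l2)%N -> (0 < d)%N ->
  (forall t, 0 <= t <= T -> psdmx (Q t)) ->
  (forall t, 0 <= t <= T -> pdmx (R1 t)) ->
  (forall t, 0 <= t <= T -> pdmx (R2 t)) ->
  forall t, 0 <= t <= T ->
  forall S : 'M[R]_n, psdmx S ->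
  psdmx (Qtilde (Q t) (stackmx (C t)) (R1 t) (R2 t)
                (stackmx (D1 t)) (stackmx (D2 t)) S).
Proof.
move=> _ _ _ _ _ HQ HR1 HR2 t ht S HS.
exact (@main_gen R _ _ _ _ (Q t) (stackmx (C t)) (R1 t) (R2 t)
  (stackmx (D1 t)) (stackmx (D2 t)) (hatmx d S)
  (HQ t ht) (HR1 t ht) (HR2 t ht) (@hat_psd R n d S HS)).
Qed.
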